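(* The set $$S=\{e\in\omega : W_e \text{ is self-constructing}\}$$ is $\Pi^0_2$-complete; that is, $S$ is a $\Pi^0_2$ set and every $\Pi^0_2$ subset of $\omega$ is many-one reducible to $S$. In particular, the set $\mathrm{Tot}=\{e : W_e=\omega\}$ is many-one reducible to $S$.
   Context: $\omega$ denotes the set of natural numbers $\{0,1,2,\dots\}$. $\langle \psi_e : e\in\omega\rangle$ is a standard (acceptable, in the sense of Rogers) computable numbering of all partial computable functions from $\omega$ to $\omega$, and $W_e$ denotes the domain of $\psi_e$. A nonempty computably enumerable set $A\subseteq\omega$ is called self-constructing if $W_e=A$ for every $e\in A$. *)

(* Defs.v *)
From Stdlib Require Import Arith.

Definition pair (a b : nat) : nat := (a + b) * (a + b + 1) / 2 + b.

Fixpoint unpair (n : nat) : nat * nat :=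
  match n with
  | 0 => (0, 0)
  | S n' => let (a, b) := unpair n' in
            match a with
            | S a' => (a', S b)
            | 0 => (S b, 0)
            end
  end.

Inductive code : Type :=
| CZero : code
| CSucc : code
| CId   : code
| CFst  : code
| CSnd  : code
| CPair : code -> code -> code (* x |-> <f x, g x> *)
| CComp : code -> code -> code (* x |-> f (g x) *)
| CRec  : code -> code -> code (* h<x,0> = f x ; h<x,n+1> = g <x,<n,h<x,n>>> *)
| CMu   : code -> code.        (* x |-> least y with f<x,y> = 0 *)

Inductive evalR : code -> nat -> nat -> Prop :=
| ev_zero x : evalR CZero x 0
| ev_succ x : evalR CSucc x (S x)
| ev_id x : evalR CId x x
| ev_fst x : evalR CFst x (fst (unpair x))
| ev_snd x : evalR CSnd x (snd (unpair x))
| ev_pair f g x a b : evalR f x a -> evalR g x b -> evalR (CPair f g) x (pair a b)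
| ev_comp f g x y z : evalR g x y -> evalR f y z -> evalR (CComp f g) x z
| ev_rec f g x n y :
    rec_graph f g x n y -> evalR (CRec f g) (pair x n) y
| ev_mu f x y : mu_from f x 0 y -> evalR (CMu f) x y
with rec_graph : code -> code -> nat -> nat -> nat -> Prop :=
| rg_zero f g x y : evalR f x y -> rec_graph f g x 0 y
| rg_succ f g x n y z :
    rec_graph f g x n y -> evalR g (pair x (pair n y)) z ->
    rec_graph f g x (S n) z
with mu_from : code -> nat -> nat -> nat -> Prop :=
| mu_here f x n : evalR f (pair x n) 0 -> mu_from f x n n
| mu_next f x n k y :
    evalR f (pair x n) (S k) -> mu_from f x (S n) y -> mu_from f x n y.

Fixpoint decode_aux (fuel n : nat) : code :=
  match fuel with
  | 0 => CZero
  | S fuel' =>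
    match n with
    | 0 => CZero
    | 1 => CSucc
    | 2 => CId
    | 3 => CFst
    | 4 => CSnd
    | _ =>
      let m := n - 5 in
      let r := m / 4 in
      let a := fst (unpair r) in
      let b := snd (unpair r) in
      match m mod 4 with
      | 0 => CPair (decode_aux fuel' a) (decode_aux fuel' b)
      | 1 => CComp (decode_aux fuel' a) (decode_aux fuel' b)
      | 2 => CRec (decode_aux fuel' a) (decode_aux fuel' b)
      | _ => CMu (decode_aux fuel' a)
      end
    end
  end.

Definition decode (n : nat) : code := decode_aux (S n) n.

Definition psi (e x y : nat) : Prop := evalR (decode e) x y.

Definition total_code (c : code) : Prop := forall x, exists y, evalR c x y.

Definition computes_total (c : code) : Prop := total_code c.

Definition CE (A : nat -> Prop) : Prop :=
  exists e, forall x, A x <-> exists y, psi e x y.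

Definition Pi02 (A : nat -> Prop) : Prop :=
  exists c : code, total_code c /\
    forall n, A n <-> forall x, exists y, evalR c (pair n (pair x y)) 0.

Definition many_one (A B : nat -> Prop) : Prop :=
  exists c : code, total_code c /\
    forall n, exists m, evalR c n m /\ (A n <-> B m).

(* A numbering of partial functions, given by graphs: phi e x y <-> phi_e(x) = y *)
Definition numbering := nat -> nat -> nat -> Prop.

Definition functional_numbering (phi : numbering) : Prop :=
  forall e x y y', phi e x y -> phi e x y' -> y = y'.

Definition acceptable (phi : numbering) : Prop :=
  functional_numbering phi /\
  (exists f : code, total_code f /\
     forall e, exists e', evalR f e e' /\ forall x y, phi e' x y <-> psi e x y) /\
  (exists g : code, total_code g /\
     forall e, exists e', evalR g e e' /\ forall x y, psi e' x y <-> phi e x y).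

Definition W (phi : numbering) (e : nat) : nat -> Prop :=
  fun x => exists y, phi e x y.

Definition self_constructing (phi : numbering) (A : nat -> Prop) : Prop :=
  (exists a, A a) /\ CE A /\
  forall e, A e -> forall x, W phi e x <-> A x.

Definition S_set (phi : numbering) : nat -> Prop :=
  fun e => self_constructing phi (W phi e).

Definition Tot (phi : numbering) : nat -> Prop :=
  fun e => forall x, W phi e x.

(* Main.v *)
Require Import Defs.
From Stdlib Require Import Arith Lia PeanoNat List Classical ClassicalEpsilon.

Lemma pair_0b b : pair 0 b = b * (b+1) / 2 + b.
Proof. reflexivity. Qed.

Lemma tri_succ s : (s+1)*(s+1+1)/2 = s*(s+1)/2 + (s+1).
Proof.
  replace ((s+1)*(s+1+1)) with (s*(s+1) + (s+1)*2) by ring.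
  rewrite Nat.div_add by lia. lia.
Qed.

Lemma pair_succ_S a b : S (pair (S a) b) = pair a (S b).
Proof.
  unfold pair. replace (a + S b) with (S a + b) by lia. lia.
Qed.

Lemma pair_succ_0 b : S (pair 0 b) = pair (S b) 0.
Proof.
  unfold pair. rewrite !Nat.add_0_l, !Nat.add_0_r.
  replace (S b) with (b+1) by lia. rewrite tri_succ. lia.
Qed.

Lemma pair_ge a b : a + b <= pair a b.
Proof.
  unfold pair. assert (a + b <= (a+b)*(a+b+1)/2); [|lia].
  apply Nat.div_le_lower_bound; [lia|]. nia.
Qed.

Lemma pair_eq0 a b : pair a b = 0 -> a = 0 /\ b = 0.
Proof.
  intros H. pose proof (pair_ge a b). lia.
Qed.

Lemma unpair_pair_gen n : forall a b, pair a b = n -> unpair n = (a,b).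
Proof.
  induction n as [|m IH]; intros a b H.
  - apply pair_eq0 in H. destruct H; subst; reflexivity.
  - destruct b as [|b'].
    + destruct a as [|a'].
      * discriminate H.
      * rewrite <- pair_succ_0 in H. injection H as H.
        simpl. rewrite (IH _ _ H). reflexivity.
    + rewrite <- pair_succ_S in H. injection H as H.
      simpl. rewrite (IH _ _ H). reflexivity.
Qed.

Lemma unpair_pair a b : unpair (pair a b) = (a,b).
Proof. apply unpair_pair_gen; reflexivity. Qed.

Lemma fst_up a b : fst (unpair (pair a b)) = a.
Proof. rewrite unpair_pair; reflexivity. Qed.
Lemma snd_up a b : snd (unpair (pair a b)) = b.
Proof. rewrite unpair_pair; reflexivity. Qed.

Lemma pair_unpair n : pair (fst (unpair n)) (snd (unpair n)) = n.
Proof.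
  induction n as [|m IH]; [reflexivity|].
  simpl. destruct (unpair m) as [a b] eqn:E. simpl in IH.
  destruct a as [|a'].
  - simpl. rewrite <- pair_succ_0. congruence.
  - simpl. rewrite <- pair_succ_S. congruence.
Qed.

Lemma pair_inj a b c d : pair a b = pair c d -> a = c /\ b = d.
Proof.
  intros H. pose proof (unpair_pair a b). rewrite H, unpair_pair in H0.
  injection H0; auto.
Qed.

Lemma fst_up_le n : fst (unpair n) <= n.
Proof. rewrite <- (pair_unpair n) at 2. pose proof (pair_ge (fst (unpair n)) (snd (unpair n))). lia. Qed.
Lemma snd_up_le n : snd (unpair n) <= n.
Proof. rewrite <- (pair_unpair n) at 2. pose proof (pair_ge (fst (unpair n)) (snd (unpair n))). lia. Qed.

Lemma decode_aux_step f m : decode_aux (S f) (5 + m) =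
  match m mod 4 with
  | 0 => CPair (decode_aux f (fst (unpair (m / 4)))) (decode_aux f (snd (unpair (m / 4))))
  | 1 => CComp (decode_aux f (fst (unpair (m / 4)))) (decode_aux f (snd (unpair (m / 4))))
  | 2 => CRec (decode_aux f (fst (unpair (m / 4)))) (decode_aux f (snd (unpair (m / 4))))
  | _ => CMu (decode_aux f (fst (unpair (m / 4))))
  end.
Proof.
  transitivity (let n := 5 + m - 5 in
  match n mod 4 with
  | 0 => CPair (decode_aux f (fst (unpair (n / 4)))) (decode_aux f (snd (unpair (n / 4))))
  | 1 => CComp (decode_aux f (fst (unpair (n / 4)))) (decode_aux f (snd (unpair (n / 4))))
  | 2 => CRec (decode_aux f (fst (unpair (n / 4)))) (decode_aux f (snd (unpair (n / 4))))
  | _ => CMu (decode_aux f (fst (unpair (n / 4))))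
  end).
  - reflexivity.
  - cbv zeta. rewrite Nat.add_comm, Nat.add_sub. reflexivity.
Qed.

Lemma decode_aux_stable f1 : forall f2 n, n < f1 -> n < f2 -> decode_aux f1 n = decode_aux f2 n.
Proof.
  induction f1 as [|f1 IH]; intros f2 n H1 H2; [lia|].
  destruct f2 as [|f2]; [lia|].
  destruct n as [|[|[|[|[|n']]]]]; try reflexivity.
  change (S (S (S (S (S n'))))) with (5 + n').
  rewrite !decode_aux_step.
  set (r := n' / 4).
  assert (r <= n') by (apply Nat.Div0.div_le_upper_bound; lia).
  pose proof (fst_up_le r). pose proof (snd_up_le r).
  rewrite (IH f2 (fst (unpair r))) by lia. rewrite (IH f2 (snd (unpair r))) by lia.
  reflexivity.
Qed.

Lemma decode_form a b d : d < 4 ->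
  decode (5 + 4 * pair a b + d) =
  match d with
  | 0 => CPair (decode a) (decode b)
  | 1 => CComp (decode a) (decode b)
  | 2 => CRec (decode a) (decode b)
  | _ => CMu (decode a)
  end.
Proof.
  intros Hd. unfold decode.
  pose proof (pair_ge a b).
  replace (5 + 4 * pair a b + d) with (5 + (4 * pair a b + d)) by lia.
  rewrite decode_aux_step.
  assert (Hq: (4 * pair a b + d) / 4 = pair a b).
  { rewrite Nat.mul_comm, Nat.div_add_l by lia. rewrite Nat.div_small by lia. lia. }
  assert (Hr: (4 * pair a b + d) mod 4 = d).
  { rewrite Nat.add_comm, Nat.mul_comm, Nat.Div0.mod_add. apply Nat.mod_small; lia. }
  rewrite Hq, Hr, unpair_pair. cbn [fst snd].
  rewrite (decode_aux_stable _ (S a) a) by lia.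
  rewrite (decode_aux_stable _ (S b) b) by lia.
  destruct d as [|[|[|[|]]]]; try reflexivity; lia.
Qed.

Fixpoint encode (c : code) : nat :=
  match c with
  | CZero => 0 | CSucc => 1 | CId => 2 | CFst => 3 | CSnd => 4
  | CPair f g => 5 + 4 * pair (encode f) (encode g) + 0
  | CComp f g => 5 + 4 * pair (encode f) (encode g) + 1
  | CRec f g => 5 + 4 * pair (encode f) (encode g) + 2
  | CMu f => 5 + 4 * pair (encode f) 0 + 3
  end.

Lemma decode_encode c : decode (encode c) = c.
Proof.
  induction c; try reflexivity.
  - change (decode (5 + 4 * pair (encode c1) (encode c2) + 0) = CPair c1 c2).
    rewrite decode_form by lia; congruence.
  - change (decode (5 + 4 * pair (encode c1) (encode c2) + 1) = CComp c1 c2).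
    rewrite decode_form by lia; congruence.
  - change (decode (5 + 4 * pair (encode c1) (encode c2) + 2) = CRec c1 c2).
    rewrite decode_form by lia; congruence.
  - change (decode (5 + 4 * pair (encode c) 0 + 3) = CMu c).
    rewrite decode_form by lia; congruence.
Qed.

Scheme evalR_mind := Minimality for evalR Sort Prop
with rec_graph_mind := Minimality for rec_graph Sort Prop
with mu_from_mind := Minimality for mu_from Sort Prop.
Combined Scheme eval_comb from evalR_mind, rec_graph_mind, mu_from_mind.

Lemma det_all :
  (forall c x y, evalR c x y -> forall y', evalR c x y' -> y = y') /\
  (forall f g x n y, rec_graph f g x n y -> forall y', rec_graph f g x n y' -> y = y') /\
  (forall f x n y, mu_from f x n y -> forall y', mu_from f x n y' -> y = y').
Proof.
  apply eval_comb; intros;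
  match goal with H : _ |- _ => inversion H; subst end;
  repeat match goal with
  | E : pair _ _ = pair _ _ |- _ => apply pair_inj in E; destruct E; subst
  | IH : forall y', evalR ?c ?x y' -> ?o = y', H : evalR ?c ?x ?o' |- _ =>
      tryif unify o o' then fail else (specialize (IH _ H); subst)
  | IH : forall y', rec_graph ?f ?g ?x ?n y' -> ?o = y', H : rec_graph ?f ?g ?x ?n ?o' |- _ =>
      tryif unify o o' then fail else (specialize (IH _ H); subst)
  | IH : forall y', mu_from ?f ?x ?n y' -> ?o = y', H : mu_from ?f ?x ?n ?o' |- _ =>
      tryif unify o o' then fail else (specialize (IH _ H); subst)
  end; try discriminate; auto.
Qed.

Lemma evalR_det c x y y' : evalR c x y -> evalR c x y' -> y = y'.
Proof. intros; eapply (proj1 det_all); eauto. Qed.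

Fixpoint rec_loop (F G : nat -> nat) (x n : nat) : nat :=
  match n with
  | 0 => F x
  | S m => G (pair x (pair m (rec_loop F G x m)))
  end.

Fixpoint ev (c : code) (x : nat) : nat :=
  match c with
  | CZero => 0
  | CSucc => S x
  | CId => x
  | CFst => fst (unpair x)
  | CSnd => snd (unpair x)
  | CPair f g => pair (ev f x) (ev g x)
  | CComp f g => ev f (ev g x)
  | CRec f g => rec_loop (ev f) (ev g) (fst (unpair x)) (snd (unpair x))
  | CMu _ => 0
  end.

Fixpoint mufree (c : code) : Prop :=
  match c with
  | CPair f g | CComp f g | CRec f g => mufree f /\ mufree g
  | CMu _ => False
  | _ => True
  end.

Definition implements (c : code) (F : nat -> nat) := forall x, evalR c x (F x).

Lemma implements_rec f g F G : implements f F -> implements g G ->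
  forall x n, rec_graph f g x n (rec_loop F G x n).
Proof.
  intros Hf Hg x n. induction n; simpl.
  - constructor. apply Hf.
  - econstructor; eauto.
Qed.

Lemma implements_CRec f g F G : implements f F -> implements g G ->
  implements (CRec f g) (fun x => rec_loop F G (fst (unpair x)) (snd (unpair x))).
Proof.
  intros Hf Hg x. rewrite <- (pair_unpair x) at 1. constructor.
  apply implements_rec; auto.
Qed.

Lemma ev_ok c : mufree c -> implements c (ev c).
Proof.
  induction c; simpl; intros H x; try constructor; try tauto.
  - apply IHc1; tauto.
  - apply IHc2; tauto.
  - econstructor; [apply IHc2|apply IHc1]; tauto.
  - rewrite <- (pair_unpair x) at 1. constructor.
    apply implements_rec; [apply IHc1|apply IHc2]; tauto.
Qed.

Lemma implements_det c F x y : implements c F -> evalR c x y -> y = F x.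
Proof. intros H1 H2. eapply evalR_det; eauto. Qed.

Lemma implements_comp f g F G : implements f F -> implements g G ->
  implements (CComp f g) (fun x => F (G x)).
Proof. intros Hf Hg x. econstructor; eauto. Qed.

Lemma implements_pair f g F G : implements f F -> implements g G ->
  implements (CPair f g) (fun x => pair (F x) (G x)).
Proof. intros Hf Hg x. constructor; auto. Qed.

Lemma implements_ext c F G : implements c F -> (forall x, F x = G x) -> implements c G.
Proof. intros H E x. rewrite <- E. auto. Qed.

Lemma total_fun c : total_code c -> { F : nat -> nat | implements c F }.
Proof.
  intros H.
  exists (fun x => proj1_sig (constructive_indefinite_description _ (H x))).
  intros x. destruct (constructive_indefinite_description _ (H x)). simpl. auto.
Qed.

Lemma implements_total c F : implements c F -> total_code c.
Proof. intros H x. eauto. Qed.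

Lemma mu_from_spec f F x n y : implements f F ->
  mu_from f x n y -> n <= y /\ F (pair x y) = 0 /\ forall k, n <= k < y -> F (pair x k) <> 0.
Proof.
  intros Hf H. induction H.
  - apply (implements_det _ _ _ _ Hf) in H. split; [lia|]. split; [auto|]. intros; lia.
  - apply (implements_det _ _ _ _ Hf) in H. destruct (IHmu_from Hf) as [A [B C]].
    split; [lia|]. split; [auto|]. intros j Hj.
    destruct (Nat.eq_dec j n) as [->|]; [congruence|]. apply C; lia.
Qed.

Lemma mu_from_exists f F x w : implements f F -> F (pair x w) = 0 ->
  forall d n, n + d = w -> exists y, mu_from f x n y.
Proof.
  intros Hf Hw d. induction d; intros n Hn.
  - exists n. constructor. replace n with w by lia. rewrite <- Hw. apply Hf.
  - destruct (F (pair x n)) eqn:E.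
    + exists n. constructor. rewrite <- E. apply Hf.
    + destruct (IHd (S n)) as [y Hy]; [lia|]. exists y. econstructor; eauto.
      rewrite <- E. apply Hf.
Qed.

Lemma CMu_conv f F x : implements f F ->
  ((exists y, evalR (CMu f) x y) <-> exists w, F (pair x w) = 0).
Proof.
  intros Hf. split.
  - intros [y Hy]. inversion Hy as [| | | | | | | |f' x' y' Hm]; subst.
    apply (mu_from_spec _ _ _ _ _ Hf) in Hm.
    exists y; tauto.
  - intros [w Hw]. destruct (mu_from_exists f F x w Hf Hw w 0 eq_refl) as [y Hy].
    exists y. constructor. auto.
Qed.

Fixpoint K (n : nat) : code := match n with 0 => CZero | S m => CComp CSucc (K m) end.
Lemma ev_K n x : ev (K n) x = n.
Proof. induction n; simpl; auto. Qed.
Lemma mf_K n : mufree (K n).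
Proof. induction n; simpl; auto. Qed.

Definition IFZ := CRec CFst (CComp CSnd CFst).
Definition ifz (c t e : code) := CComp IFZ (CPair (CPair t e) c).
Lemma ev_ifz c t e x : ev (ifz c t e) x = match ev c x with 0 => ev t x | S _ => ev e x end.
Proof.
  unfold ifz, IFZ. cbn [ev]. rewrite fst_up, snd_up.
  destruct (ev c x); cbn [rec_loop ev]; rewrite ?fst_up, ?snd_up; reflexivity.
Qed.
Lemma mf_ifz c t e : mufree c -> mufree t -> mufree e -> mufree (ifz c t e).
Proof. simpl; tauto. Qed.

Definition PRED := CComp (CRec CZero (CComp CFst CSnd)) (CPair CZero CId).
Lemma ev_PRED x : ev PRED x = pred x.
Proof.
  unfold PRED. cbn [ev]. rewrite fst_up, snd_up.
  destruct x; cbn [rec_loop]; rewrite ?snd_up, ?fst_up; reflexivity.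
Qed.
Lemma mf_PRED : mufree PRED.
Proof. simpl; tauto. Qed.

Definition SUBc := CRec CId (CComp PRED (CComp CSnd CSnd)).
Lemma ev_SUBc a b : ev SUBc (pair a b) = a - b.
Proof.
  unfold SUBc. cbn [ev]. rewrite fst_up, snd_up.
  induction b; cbn [rec_loop ev]; [lia|]. rewrite ?snd_up, ev_PRED, IHb. lia.
Qed.
Lemma mf_SUBc : mufree SUBc.
Proof. simpl; tauto. Qed.

Definition ADDc := CRec CId (CComp CSucc (CComp CSnd CSnd)).
Lemma ev_ADDc a b : ev ADDc (pair a b) = a + b.
Proof.
  unfold ADDc. cbn [ev]. rewrite fst_up, snd_up.
  induction b; cbn [rec_loop ev]; [lia|]. rewrite ?snd_up, IHb. lia.
Qed.
Lemma mf_ADDc : mufree ADDc.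
Proof. simpl; tauto. Qed.

Definition app2 h a b := CComp h (CPair a b).
Lemma ev_app2 h a b x : ev (app2 h a b) x = ev h (pair (ev a x) (ev b x)).
Proof. reflexivity. Qed.
Lemma mf_app2 h a b : mufree h -> mufree a -> mufree b -> mufree (app2 h a b).
Proof. simpl; tauto. Qed.

Definition andc c1 c2 := ifz c1 c2 (K 1).
Definition orc c1 c2 := ifz c1 (K 0) c2.
Definition notc c := ifz c (K 1) (K 0).
Definition eqc a b := andc (app2 SUBc a b) (app2 SUBc b a).

Lemma ev_andc c1 c2 x : ev (andc c1 c2) x = 0 <-> ev c1 x = 0 /\ ev c2 x = 0.
Proof. unfold andc. rewrite ev_ifz. destruct (ev c1 x); rewrite ?ev_K; intuition congruence. Qed.
Lemma ev_orc c1 c2 x : ev (orc c1 c2) x = 0 <-> ev c1 x = 0 \/ ev c2 x = 0.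
Proof. unfold orc. rewrite ev_ifz. destruct (ev c1 x); rewrite ?ev_K; intuition congruence. Qed.
Lemma ev_notc c x : ev (notc c) x = 0 <-> ev c x <> 0.
Proof. unfold notc. rewrite ev_ifz. destruct (ev c x); rewrite ?ev_K; intuition congruence. Qed.
Lemma ev_eqc a b x : ev (eqc a b) x = 0 <-> ev a x = ev b x.
Proof. unfold eqc. rewrite ev_andc, !ev_app2, !ev_SUBc. lia. Qed.

Lemma mf_andc a b : mufree a -> mufree b -> mufree (andc a b).
Proof. intros; unfold andc; apply mf_ifz; auto using mf_K. Qed.
Lemma mf_orc a b : mufree a -> mufree b -> mufree (orc a b).
Proof. intros; unfold orc; apply mf_ifz; auto using mf_K. Qed.
Lemma mf_notc a : mufree a -> mufree (notc a).
Proof. intros; unfold notc; apply mf_ifz; auto using mf_K. Qed.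
Lemma mf_eqc a b : mufree a -> mufree b -> mufree (eqc a b).
Proof. intros; unfold eqc; apply mf_andc; apply mf_app2; auto using mf_SUBc. Qed.

Fixpoint enc (l : list nat) : nat := match l with nil => 0 | h :: t => S (pair h (enc t)) end.

Lemma enc_surj L : exists l, enc l = L.
Proof.
  induction L as [L IH] using (well_founded_induction lt_wf).
  destruct L as [|m]; [exists nil; reflexivity|].
  destruct (IH (snd (unpair m))) as [t Ht]. { pose proof (snd_up_le m). lia. }
  exists (fst (unpair m) :: t). simpl. rewrite Ht, pair_unpair. reflexivity.
Qed.

Lemma length_le l : length l <= enc l.
Proof. induction l; simpl; auto. pose proof (pair_ge a (enc l)). lia. Qed.

Definition ACC := CComp CFst (CComp CSnd CSnd).
Definition CUR := CComp CSnd (CComp CSnd CSnd).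
Definition XX := CComp CFst CFst.
Definition HD := CComp CFst (CComp PRED CUR).
Definition TL := CComp CSnd (CComp PRED CUR).
Definition STEP (P : code) :=
  CPair (andc ACC (ifz CUR (K 0) (CComp P (CPair XX (CPair HD TL))))) TL.
Definition ALL (P : code) :=
  CComp CFst (CComp (CRec (CPair (K 0) CSnd) (STEP P)) (CPair CId (CComp CSucc CSnd))).

Lemma mf_ALL P : mufree P -> mufree (ALL P).
Proof.
  intros H. unfold ALL, STEP, ACC, CUR, XX, HD, TL.
  repeat (cbn [mufree]; repeat split; auto using mf_K, mf_PRED;
    try apply mf_andc; try apply mf_ifz; auto using mf_K, mf_PRED).
Qed.

Fixpoint AllSuf (P : nat -> nat -> list nat -> Prop) (x : nat) (l : list nat) : Prop :=
  match l with nil => True | h :: t => P x h t /\ AllSuf P x t end.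

Lemma ev_ALL (Pc : code) (P : nat -> nat -> list nat -> Prop) x l :
  (forall h t, ev Pc (pair x (pair h (enc t))) = 0 <-> P x h t) ->
  (ev (ALL Pc) (pair x (enc l)) = 0 <-> AllSuf P x l).
Proof.
  intros HP. unfold ALL. cbn [ev]. rewrite fst_up, snd_up.
  set (X := pair x (enc l)).
  assert (Hst : forall m s, ev (STEP Pc) (pair X (pair m s)) =
     pair (ev (andc ACC (ifz CUR (K 0) (CComp Pc (CPair XX (CPair HD TL))))) (pair X (pair m s)))
          (snd (unpair (pred (snd (unpair s)))))).
  { intros. unfold STEP, TL, CUR. cbn [ev]. rewrite !snd_up, ev_PRED. reflexivity. }
  assert (Hgen : forall k l' acc, length l' <= k -> (exists suf, l = suf ++ l') ->
     fst (unpair (Nat.iter k (fun s => ev (STEP Pc) (pair X (pair 0 s))) (pair acc (enc l')))) = 0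
     <-> acc = 0 /\ AllSuf P x l').
  { induction k; intros l' acc Hk Hsuf.
    - destruct l'; simpl in Hk; [|lia]. simpl. rewrite fst_up. tauto.
    - rewrite Nat.iter_succ_r. rewrite Hst.
      destruct l' as [|h t].
      + simpl enc. replace (snd (unpair (pred (snd (unpair (pair acc 0)))))) with 0
          by (rewrite snd_up; simpl; reflexivity).
        pose proof (IHk nil) as E. simpl enc in E. rewrite E; [|simpl; lia| exact Hsuf]. clear E.
        rewrite ev_andc. unfold ACC, CUR. rewrite ev_ifz. cbn [ev]. rewrite !snd_up, !fst_up.
        cbn [AllSuf]. tauto.
      + simpl enc. rewrite snd_up. simpl pred. rewrite snd_up.
        rewrite IHk; [|simpl in Hk; lia|].
        2:{ destruct Hsuf as [suf ->]. exists (suf ++ h :: nil). rewrite <- app_assoc. reflexivity. }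
        rewrite ev_andc. unfold ACC, CUR. rewrite ev_ifz. cbn [ev]. rewrite !snd_up, !fst_up.
        unfold XX, HD, TL, CUR. cbn [ev].
        rewrite !snd_up, !fst_up, ev_PRED. simpl pred. rewrite !fst_up, !snd_up.
        subst X. rewrite fst_up. rewrite HP. cbn [AllSuf]. tauto. }
  assert (Hm : forall m s, ev (STEP Pc) (pair X (pair m s)) = ev (STEP Pc) (pair X (pair 0 s))).
  { intros m s. clear Hgen Hst. unfold STEP, ACC, XX, HD, TL, andc, CUR. cbn [ev]. rewrite !ev_ifz.
      cbn [ev]. rewrite !snd_up, !fst_up, !ev_K. reflexivity. }
  assert (Hiter : forall k, rec_loop (ev (CPair (K 0) CSnd)) (ev (STEP Pc)) X k =
      Nat.iter k (fun s => ev (STEP Pc) (pair X (pair 0 s))) (pair 0 (enc l))).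
  { induction k; cbn [rec_loop Nat.iter].
    - subst X. cbn [ev]. rewrite ev_K, snd_up. reflexivity.
    - rewrite IHk. apply Hm. }
  rewrite Hiter. rewrite Hgen; [tauto| |exists nil; reflexivity].
  unfold X; rewrite snd_up. pose proof (length_le l). lia.
Qed.

Definition mkJ t p q x n y := pair t (pair p (pair q (pair x (pair n y)))).
Definition Jsem (J : nat) : Prop :=
  let t := fst (unpair J) in
  let r1 := snd (unpair J) in let p := fst (unpair r1) in
  let r2 := snd (unpair r1) in let q := fst (unpair r2) in
  let r3 := snd (unpair r2) in let x := fst (unpair r3) in
  let r4 := snd (unpair r3) in let n := fst (unpair r4) in let y := snd (unpair r4) in
  match t with
  | 0 => evalR (decode p) x y
  | 1 => rec_graph (decode p) (decode q) x n y
  | 2 => mu_from (decode p) x n y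
  | _ => False
  end.

Lemma Jsem_mk t p q x n y : Jsem (mkJ t p q x n y) <->
  match t with
  | 0 => evalR (decode p) x y
  | 1 => rec_graph (decode p) (decode q) x n y
  | 2 => mu_from (decode p) x n y
  | _ => False
  end.
Proof. unfold Jsem, mkJ. cbv zeta. rewrite ?fst_up, ?snd_up, ?fst_up, ?snd_up, ?fst_up, ?snd_up, ?fst_up, ?snd_up. tauto. Qed.

Definition memJ (J : nat) (t : list nat) := exists h, In h t /\ fst (unpair h) = J.

Definition MEMc := notc (ALL (notc (eqc (CComp CFst (CComp CFst CSnd)) CFst))).

Lemma AllSuf_forall (P : nat -> nat -> Prop) x l :
  AllSuf (fun x h t => P x h) x l <-> forall h, In h l -> P x h.
Proof.
  induction l; simpl; [tauto|]. rewrite IHl. firstorder congruence.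
Qed.

Lemma ev_MEMc J t : ev MEMc (pair J (enc t)) = 0 <-> memJ J t.
Proof.
  unfold MEMc. rewrite ev_notc.
  rewrite (ev_ALL _ (fun x h t => fst (unpair h) <> x)).
  - rewrite (AllSuf_forall (fun x h => fst (unpair h) <> x)). unfold memJ.
    split.
    + intros H. apply Classical_Prop.NNPP. intros H2. apply H. intros h Hh E. apply H2. eauto.
    + intros [h [H1 H2]] H. apply (H h H1 H2).
  - intros h t'. rewrite ev_notc, ev_eqc. cbn [ev]. rewrite !snd_up, !fst_up. tauto.
Qed.

Lemma mf_MEMc : mufree MEMc.
Proof.
  unfold MEMc. apply mf_notc, mf_ALL, mf_notc, mf_eqc; simpl; tauto.
Qed.

Definition mkline t p q x n y a b z := pair (mkJ t p q x n y) (pair a (pair b z)).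

Definition LINE := CComp CFst CSnd.
Definition RR := CComp CSnd CSnd.
Definition J_ := CComp CFst LINE.
Definition W_ := CComp CSnd LINE.
Definition TAGc := CComp CFst J_.
Definition Pc := CComp CFst (CComp CSnd J_).
Definition Qc := CComp CFst (CComp CSnd (CComp CSnd J_)).
Definition Xc := CComp CFst (CComp CSnd (CComp CSnd (CComp CSnd J_))).
Definition Nc := CComp CFst (CComp CSnd (CComp CSnd (CComp CSnd (CComp CSnd J_)))).
Definition Yc := CComp CSnd (CComp CSnd (CComp CSnd (CComp CSnd (CComp CSnd J_)))).
Definition Ac := CComp CFst W_.
Definition Bc := CComp CFst (CComp CSnd W_).
Definition Zc := CComp CSnd (CComp CSnd W_).

Ltac upsimp := repeat (first [rewrite fst_up | rewrite snd_up]).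

Section Fields.
Variables (x0 t p q x n y a b z r : nat).
Let I := pair x0 (pair (mkline t p q x n y a b z) r).
Lemma ev_RR : ev RR I = r.
Proof. unfold I, RR. cbn [ev]. upsimp. reflexivity. Qed.
Lemma ev_TAGc : ev TAGc I = t.
Proof. unfold I, TAGc, J_, LINE, mkline, mkJ. cbn [ev]. upsimp. reflexivity. Qed.
Lemma ev_Pc : ev Pc I = p.
Proof. unfold I, Pc, J_, LINE, mkline, mkJ. cbn [ev]. upsimp. reflexivity. Qed.
Lemma ev_Qc : ev Qc I = q.
Proof. unfold I, Qc, J_, LINE, mkline, mkJ. cbn [ev]. upsimp. reflexivity. Qed.
Lemma ev_Xc : ev Xc I = x.
Proof. unfold I, Xc, J_, LINE, mkline, mkJ. cbn [ev]. upsimp. reflexivity. Qed.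
Lemma ev_Nc : ev Nc I = n.
Proof. unfold I, Nc, J_, LINE, mkline, mkJ. cbn [ev]. upsimp. reflexivity. Qed.
Lemma ev_Yc : ev Yc I = y.
Proof. unfold I, Yc, J_, LINE, mkline, mkJ. cbn [ev]. upsimp. reflexivity. Qed.
Lemma ev_Ac : ev Ac I = a.
Proof. unfold I, Ac, W_, LINE, mkline, mkJ. cbn [ev]. upsimp. reflexivity. Qed.
Lemma ev_Bc : ev Bc I = b.
Proof. unfold I, Bc, W_, LINE, mkline, mkJ. cbn [ev]. upsimp. reflexivity. Qed.
Lemma ev_Zc : ev Zc I = z.
Proof. unfold I, Zc, W_, LINE, mkline, mkJ. cbn [ev]. upsimp. reflexivity. Qed.
End Fields.

Definition K0 := K 0.
Definition mkJc t p q x n y := CPair t (CPair p (CPair q (CPair x (CPair n y)))).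
Definition memc j := CComp MEMc (CPair j RR).
Definition P1c c := CComp PRED c.
Definition T4 c := app2 ADDc (app2 ADDc c c) (app2 ADDc c c).
Definition BASEc := app2 ADDc (K 5) (T4 (CPair Ac Bc)).
Definition Dc := app2 SUBc Pc BASEc.
Definition EGEN :=
  andc (eqc Pc (app2 ADDc BASEc Dc))
  (ifz Dc (andc (memc (mkJc K0 Ac K0 Xc K0 (CComp CFst Yc))) (memc (mkJc K0 Bc K0 Xc K0 (CComp CSnd Yc))))
  (ifz (P1c Dc) (andc (memc (mkJc K0 Bc K0 Xc K0 Zc)) (memc (mkJc K0 Ac K0 Zc K0 Yc)))
  (ifz (P1c (P1c Dc)) (memc (mkJc (K 1) Ac Bc (CComp CFst Xc) (CComp CSnd Xc) Yc))
  (ifz (P1c (P1c (P1c Dc))) (memc (mkJc (K 2) Ac K0 Xc K0 Yc)) (K 1))))).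
Definition ELINE :=
  ifz Pc (eqc Yc K0) (ifz (P1c Pc) (eqc Yc (CComp CSucc Xc))
  (ifz (P1c (P1c Pc)) (eqc Yc Xc)
  (ifz (P1c (P1c (P1c Pc))) (eqc Yc (CComp CFst Xc))
  (ifz (P1c (P1c (P1c (P1c Pc)))) (eqc Yc (CComp CSnd Xc)) EGEN)))).
Definition GLINE :=
  ifz Nc (memc (mkJc K0 Pc K0 Xc K0 Yc))
  (andc (memc (mkJc (K 1) Pc Qc Xc (P1c Nc) Zc))
        (memc (mkJc K0 Qc K0 (CPair Xc (CPair (P1c Nc) Zc)) K0 Yc))).
Definition MLINE :=
  orc (andc (eqc Yc Nc) (memc (mkJc K0 Pc K0 (CPair Xc Nc) K0 K0)))
      (andc (memc (mkJc K0 Pc K0 (CPair Xc Nc) K0 (CComp CSucc Zc)))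
            (memc (mkJc (K 2) Pc Qc Xc (CComp CSucc Nc) Yc))).
Definition LVc := ifz TAGc ELINE (ifz (P1c TAGc) GLINE (ifz (P1c (P1c TAGc)) MLINE (K 1))).

Definition LVspec (tag p q x n y a b z : nat) (Mm : nat -> Prop) : Prop :=
 match tag with
 | 0 => match p with
        | 0 => y = 0 | 1 => y = S x | 2 => y = x | 3 => y = fst (unpair x)
        | 4 => y = snd (unpair x)
        | _ => 5 + 4 * pair a b <= p /\
               match p - (5 + 4 * pair a b) with
               | 0 => Mm (mkJ 0 a 0 x 0 (fst (unpair y))) /\ Mm (mkJ 0 b 0 x 0 (snd (unpair y)))
               | 1 => Mm (mkJ 0 b 0 x 0 z) /\ Mm (mkJ 0 a 0 z 0 y)
               | 2 => Mm (mkJ 1 a b (fst (unpair x)) (snd (unpair x)) y)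
               | 3 => Mm (mkJ 2 a 0 x 0 y)
               | _ => False end
        end
 | 1 => match n with
        | 0 => Mm (mkJ 0 p 0 x 0 y)
        | S n' => Mm (mkJ 1 p q x n' z) /\ Mm (mkJ 0 q 0 (pair x (pair n' z)) 0 y) end
 | 2 => (y = n /\ Mm (mkJ 0 p 0 (pair x n) 0 0)) \/
        (Mm (mkJ 0 p 0 (pair x n) 0 (S z)) /\ Mm (mkJ 2 p q x (S n) y))
 | _ => False
 end.

Section LV.
Variables (x0 t p q x n y a b z : nat) (l : list nat).
Let I := pair x0 (pair (mkline t p q x n y a b z) (enc l)).

Lemma ev_memc j : ev (memc j) I = 0 <-> memJ (ev j I) l.
Proof. unfold memc. cbn [ev]. unfold I at 2. rewrite ev_RR. apply ev_MEMc. Qed.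
Lemma ev_mkJc c1 c2 c3 c4 c5 c6 :
  ev (mkJc c1 c2 c3 c4 c5 c6) I = mkJ (ev c1 I) (ev c2 I) (ev c3 I) (ev c4 I) (ev c5 I) (ev c6 I).
Proof. reflexivity. Qed.
Lemma ev_P1c c : ev (P1c c) I = pred (ev c I).
Proof. unfold P1c. cbn [ev]. apply ev_PRED. Qed.
Lemma ev_BASEc : ev BASEc I = 5 + 4 * pair a b.
Proof.
  unfold BASEc, T4. rewrite !ev_app2, !ev_ADDc, ev_K. cbn [ev].
  unfold I. rewrite ev_Ac, ev_Bc. lia.
Qed.
Lemma ev_Dc : ev Dc I = p - (5 + 4 * pair a b).
Proof. unfold Dc. rewrite ev_app2, ev_SUBc, ev_BASEc. unfold I; rewrite ev_Pc. reflexivity. Qed.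
End LV.

Lemma ev_K0 x : ev K0 x = 0.
Proof. reflexivity. Qed.

Opaque andc orc notc eqc memc mkJc K0 BASEc Dc P1c.

Ltac fsimp := repeat (first [ rewrite ev_TAGc | rewrite ev_Pc | rewrite ev_Qc | rewrite ev_Xc
  | rewrite ev_Nc | rewrite ev_Yc | rewrite ev_Ac | rewrite ev_Bc | rewrite ev_Zc
  | rewrite ev_P1c | rewrite ev_Dc | rewrite ev_BASEc | rewrite ev_ifz | rewrite ev_K0 | rewrite ev_K
  | rewrite ev_andc | rewrite ev_orc | rewrite ev_eqc | rewrite ev_memc | rewrite ev_mkJc
  | rewrite ev_app2 | rewrite ev_ADDc | progress cbn [ev] ]).

Ltac fin := try tauto; try (split; [discriminate|tauto]); try (split; [intros; lia|tauto]).

Lemma ev_LVc x0 t p q x n y a b z l :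
  ev LVc (pair x0 (pair (mkline t p q x n y a b z) (enc l))) = 0 <->
  LVspec t p q x n y a b z (fun J => memJ J l).
Proof.
  unfold LVc. fsimp. cbn [Nat.pred].
  destruct t as [|[|[|t]]]; cbn [Nat.pred]; unfold LVspec.
  - unfold ELINE. fsimp. cbn [Nat.pred].
    destruct p as [|[|[|[|[|p']]]]]; cbn [Nat.pred]; fsimp; try tauto.
    unfold EGEN. fsimp.
    remember (S (S (S (S (S p')))) - (5 + 4 * pair a b)) as d.
    assert (S (S (S (S (S p')))) = 5 + 4 * pair a b + d <-> 5 + 4 * pair a b <= S (S (S (S (S p'))))) by lia.
    rewrite H. apply and_iff_compat_l.
    destruct d as [|[|[|[|d]]]]; cbn [Nat.pred]; fsimp; fin.
  - unfold GLINE. fsimp. destruct n; cbn [Nat.pred]; fsimp; fin.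
  - unfold MLINE. fsimp. fin.
  - fsimp. fin.
Qed.

Lemma decode_inv_form e : e <= 4 \/ exists a b d, d < 4 /\ e = 5 + 4 * pair a b + d.
Proof.
  destruct (le_lt_dec e 4) as [H|H]; [left; auto|right].
  exists (fst (unpair ((e - 5) / 4))), (snd (unpair ((e-5)/4))), ((e-5) mod 4).
  rewrite pair_unpair. split. apply Nat.mod_upper_bound; lia.
  pose proof (Nat.div_mod (e-5) 4). lia.
Qed.

Lemma decode_inv e c : decode e = c ->
  match c with
  | CZero => e = 0 | CSucc => e = 1 | CId => e = 2 | CFst => e = 3 | CSnd => e = 4
  | CPair f g => exists a b, e = 5 + 4 * pair a b + 0 /\ decode a = f /\ decode b = g
  | CComp f g => exists a b, e = 5 + 4 * pair a b + 1 /\ decode a = f /\ decode b = g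
  | CRec f g => exists a b, e = 5 + 4 * pair a b + 2 /\ decode a = f /\ decode b = g
  | CMu f => exists a b, e = 5 + 4 * pair a b + 3 /\ decode a = f
  end.
Proof.
  intros H. destruct (decode_inv_form e) as [Hs|[a [b [d [Hd ->]]]]].
  - destruct e as [|[|[|[|[|e]]]]]; try lia; rewrite <- H; reflexivity.
  - rewrite decode_form in H by lia. subst c.
    destruct d as [|[|[|[|d]]]]; try lia; eauto.
Qed.

Lemma mkline_surj h : exists t p q x n y a b z, h = mkline t p q x n y a b z.
Proof.
  unfold mkline, mkJ.
  rewrite <- (pair_unpair h). set (J := fst (unpair h)). set (w := snd (unpair h)).
  rewrite <- (pair_unpair J). rewrite <- (pair_unpair (snd (unpair J))).
  rewrite <- (pair_unpair (snd (unpair (snd (unpair J))))).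
  rewrite <- (pair_unpair (snd (unpair (snd (unpair (snd (unpair J))))))).
  rewrite <- (pair_unpair (snd (unpair (snd (unpair (snd (unpair (snd (unpair J))))))))).
  rewrite <- (pair_unpair w). rewrite <- (pair_unpair (snd (unpair w))).
  eauto 20.
Qed.

Definition LVok h t := ev LVc (pair 0 (pair h (enc t))) = 0.
Definition Valid (l : list nat) := AllSuf (fun _ h t => LVok h t) 0 l.

Lemma LVspec_mono t p q x n y a b z (M1 M2 : nat -> Prop) :
  (forall J, M1 J -> M2 J) -> LVspec t p q x n y a b z M1 -> LVspec t p q x n y a b z M2.
Proof.
  intros HM H. unfold LVspec in *.
  destruct t as [|[|[|t]]]; try tauto.
  - destruct p as [|[|[|[|[|p]]]]]; try tauto.
    destruct H as [H1 H2]. split; auto.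
    destruct (S (S (S (S (S p)))) - (5 + 4 * pair a b)) as [|[|[|[|]]]]; firstorder.
  - destruct n; firstorder.
  - firstorder.
Qed.

Lemma memJ_app_l J l1 l2 : memJ J l1 -> memJ J (l1 ++ l2).
Proof. intros [h [H1 H2]]. exists h. split; auto. apply in_or_app; auto. Qed.
Lemma memJ_app_r J l1 l2 : memJ J l2 -> memJ J (l1 ++ l2).
Proof. intros [h [H1 H2]]. exists h. split; auto. apply in_or_app; auto. Qed.

Lemma LVok_mono h t t' : (forall J, memJ J t -> memJ J t') -> LVok h t -> LVok h t'.
Proof.
  intros HM. destruct (mkline_surj h) as (tg & p & q & x & n & y & a & b & z & ->).
  unfold LVok. rewrite !ev_LVc. apply LVspec_mono; auto.
Qed.

Lemma Valid_app l1 l2 : Valid l1 -> Valid l2 -> Valid (l1 ++ l2).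
Proof.
  unfold Valid. induction l1 as [|h t IH]; simpl; auto.
  intros [H1 H2] H3. split; auto.
  eapply LVok_mono; [|exact H1]. intros; apply memJ_app_l; auto.
Qed.

Lemma Valid_cons h l : Valid l -> LVok h l -> Valid (h :: l).
Proof. unfold Valid; simpl; tauto. Qed.

Lemma spec_sound t p q x n y a b z (Mm : nat -> Prop) :
  (forall J, Mm J -> Jsem J) -> LVspec t p q x n y a b z Mm -> Jsem (mkJ t p q x n y).
Proof.
  intros HM H. rewrite Jsem_mk. unfold LVspec in H.
  destruct t as [|[|[|t]]]; try tauto.
  - destruct p as [|[|[|[|[|p']]]]]; try (subst; constructor).
    destruct H as [Hb H].
    remember (S (S (S (S (S p')))) - (5 + 4 * pair a b)) as d.
    assert (Ep : S (S (S (S (S p')))) = 5 + 4 * pair a b + d) by lia.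
    rewrite Ep.
    destruct d as [|[|[|[|d]]]]; try tauto; rewrite decode_form by lia.
    + destruct H as [H1 H2]. apply HM in H1, H2. rewrite Jsem_mk in H1, H2.
      rewrite <- (pair_unpair y). constructor; auto.
    + destruct H as [H1 H2]. apply HM in H1, H2. rewrite Jsem_mk in H1, H2.
      econstructor; eauto.
    + apply HM in H. rewrite Jsem_mk in H. rewrite <- (pair_unpair x). constructor; auto.
    + apply HM in H. rewrite Jsem_mk in H. constructor; auto.
  - destruct n as [|n'].
    + apply HM in H. rewrite Jsem_mk in H. constructor; auto.
    + destruct H as [H1 H2]. apply HM in H1, H2. rewrite Jsem_mk in H1, H2. econstructor; eauto.
  - destruct H as [[-> H]|[H1 H2]].
    + apply HM in H. rewrite Jsem_mk in H. constructor; auto.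
    + apply HM in H1, H2. rewrite Jsem_mk in H1, H2. econstructor; eauto.
Qed.

Lemma Valid_sound l : Valid l -> forall h, In h l -> Jsem (fst (unpair h)).
Proof.
  unfold Valid. induction l as [|h t IH]; simpl; [tauto|].
  intros [H1 H2] h' [<-|Hin]; auto.
  destruct (mkline_surj h) as (tg & p & q & x & n & y & a & b & z & ->).
  unfold LVok in H1. rewrite ev_LVc in H1.
  unfold mkline. rewrite fst_up. eapply spec_sound; [|exact H1].
  intros J [h' [Hh' <-]]. apply IH; auto.
Qed.

Lemma LVspec_gen q x n y a b z d M :
  LVspec 0 (5 + 4 * pair a b + d) q x n y a b z M <->
  match d with
  | 0 => M (mkJ 0 a 0 x 0 (fst (unpair y))) /\ M (mkJ 0 b 0 x 0 (snd (unpair y)))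
  | 1 => M (mkJ 0 b 0 x 0 z) /\ M (mkJ 0 a 0 z 0 y)
  | 2 => M (mkJ 1 a b (fst (unpair x)) (snd (unpair x)) y)
  | 3 => M (mkJ 2 a 0 x 0 y)
  | _ => False end.
Proof.
  unfold LVspec.
  replace (5 + 4 * pair a b + d) with (S (S (S (S (S (4 * pair a b + d)))))) by lia.
  replace (S (S (S (S (S (4 * pair a b + d))))) - (5 + 4 * pair a b)) with d by lia.
  split; [tauto|]. intros H; split; [lia|exact H].
Qed.

Lemma extend tg p q x n y a b z l : Valid l ->
  LVspec tg p q x n y a b z (fun J => memJ J l) ->
  exists l', Valid l' /\ memJ (mkJ tg p q x n y) l'.
Proof.
  intros Hv Hs. exists (mkline tg p q x n y a b z :: l). split.
  - apply Valid_cons; auto. unfold LVok. rewrite ev_LVc. auto.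
  - exists (mkline tg p q x n y a b z). split; [left; auto|]. unfold mkline. apply fst_up.
Qed.

Lemma complete_all :
  (forall c x y, evalR c x y -> forall e, decode e = c ->
      exists l, Valid l /\ memJ (mkJ 0 e 0 x 0 y) l) /\
  (forall f g x n y, rec_graph f g x n y -> forall a b, decode a = f -> decode b = g ->
      exists l, Valid l /\ memJ (mkJ 1 a b x n y) l) /\
  (forall f x n y, mu_from f x n y -> forall a q, decode a = f ->
      exists l, Valid l /\ memJ (mkJ 2 a q x n y) l).
Proof.
  apply eval_comb.
  - intros x e He. apply decode_inv in He. subst.
    apply (extend 0 0 0 x 0 0 0 0 0 nil); [exact I|reflexivity].
  - intros x e He. apply decode_inv in He. subst.
    apply (extend 0 1 0 x 0 (S x) 0 0 0 nil); [exact I|reflexivity].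
  - intros x e He. apply decode_inv in He. subst.
    apply (extend 0 2 0 x 0 x 0 0 0 nil); [exact I|reflexivity].
  - intros x e He. apply decode_inv in He. subst.
    apply (extend 0 3 0 x 0 _ 0 0 0 nil); [exact I|reflexivity].
  - intros x e He. apply decode_inv in He. subst.
    apply (extend 0 4 0 x 0 _ 0 0 0 nil); [exact I|reflexivity].
  - intros f g x a b _ IH1 _ IH2 e He. apply decode_inv in He.
    destruct He as (a' & b' & -> & Ha & Hb).
    destruct (IH1 a' Ha) as (l1 & V1 & M1). destruct (IH2 b' Hb) as (l2 & V2 & M2).
    apply (extend 0 _ 0 x 0 (pair a b) a' b' 0 (l1 ++ l2)). apply Valid_app; auto.
    apply LVspec_gen. rewrite fst_up, snd_up. split.
    apply memJ_app_l; auto. apply memJ_app_r; auto.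
  - intros f g x y z _ IH1 _ IH2 e He. apply decode_inv in He.
    destruct He as (a' & b' & -> & Ha & Hb).
    destruct (IH1 b' Hb) as (l1 & V1 & M1). destruct (IH2 a' Ha) as (l2 & V2 & M2).
    apply (extend 0 _ 0 x 0 z a' b' y (l1 ++ l2)). apply Valid_app; auto.
    apply LVspec_gen. split.
    apply memJ_app_l; auto. apply memJ_app_r; auto.
  - intros f g x n y _ IH e He. apply decode_inv in He.
    destruct He as (a' & b' & -> & Ha & Hb).
    destruct (IH a' b' Ha Hb) as (l1 & V1 & M1).
    apply (extend 0 _ 0 (pair x n) 0 y a' b' 0 l1); auto.
    apply LVspec_gen. rewrite fst_up, snd_up. auto.
  - intros f x y _ IH e He. apply decode_inv in He.
    destruct He as (a' & b' & -> & Ha).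
    destruct (IH a' 0 Ha) as (l1 & V1 & M1).
    apply (extend 0 _ 0 x 0 y a' b' 0 l1); auto.
    apply LVspec_gen. auto.
  - intros f g x y _ IH a b Ha Hb.
    destruct (IH a Ha) as (l1 & V1 & M1).
    apply (extend 1 a b x 0 y 0 0 0 l1); auto.
  - intros f g x n y z _ IH1 _ IH2 a b Ha Hb.
    destruct (IH1 a b Ha Hb) as (l1 & V1 & M1). destruct (IH2 b Hb) as (l2 & V2 & M2).
    apply (extend 1 a b x (S n) z 0 0 y (l1 ++ l2)). apply Valid_app; auto.
    split. apply memJ_app_l; auto. apply memJ_app_r; auto.
  - intros f x n _ IH a q Ha.
    destruct (IH a Ha) as (l1 & V1 & M1).
    apply (extend 2 a q x n n 0 0 0 l1); auto. left; auto.
  - intros f x n k y _ IH1 _ IH2 a q Ha.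
    destruct (IH1 a Ha) as (l1 & V1 & M1). destruct (IH2 a q Ha) as (l2 & V2 & M2).
    apply (extend 2 a q x n y 0 0 k (l1 ++ l2)). apply Valid_app; auto.
    right. split. apply memJ_app_l; auto. apply memJ_app_r; auto.
Qed.

Fixpoint mfb (c : code) : bool :=
  match c with
  | CPair f g | CComp f g | CRec f g => mfb f && mfb g
  | CMu _ => false
  | _ => true
  end.
Lemma mfb_ok c : mfb c = true -> mufree c.
Proof.
  induction c; simpl; auto; try discriminate;
  intros H; apply andb_prop in H; tauto.
Qed.

Ltac upsimpH H := repeat (first [rewrite fst_up in H | rewrite snd_up in H]).

Definition Dd := CComp CSnd (CComp CSnd CSnd).
Definition TC :=
  andc (CComp (ALL LVc) (CPair K0 Dd))
       (CComp MEMc (CPair (mkJc K0 CFst K0 (CComp CFst CSnd) K0 (CComp CFst (CComp CSnd CSnd))) Dd)).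

Lemma mf_TC : mufree TC.
Proof. apply mfb_ok. vm_compute. reflexivity. Qed.

Lemma ev_ValidC l : ev (ALL LVc) (pair 0 (enc l)) = 0 <-> Valid l.
Proof. apply (ev_ALL LVc (fun _ h t => LVok h t)). intros; unfold LVok; tauto. Qed.

Lemma TC_spec e x y : evalR (decode e) x y <-> exists d, ev TC (pair e (pair x (pair y d))) = 0.
Proof.
  Transparent andc mkJc K0.
  unfold TC. split.
  - intros H. destruct ((proj1 complete_all) _ _ _ H e eq_refl) as (l & V & M).
    exists (enc l). rewrite ev_andc. cbn [ev]. unfold Dd. cbn [ev]. upsimp.
    split.
    + apply ev_ValidC; auto.
    + apply ev_MEMc. unfold mkJc. cbn [ev]. upsimp. exact M.
  - intros [d Hd]. destruct (enc_surj d) as [l <-].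
    rewrite ev_andc in Hd. cbn [ev] in Hd. unfold Dd in Hd. cbn [ev] in Hd.
    upsimpH Hd. destruct Hd as [H1 H2].
    apply ev_ValidC in H1. apply ev_MEMc in H2. unfold mkJc in H2. cbn [ev] in H2.
    upsimpH H2.
    destruct H2 as [h [Hin Hh]]. rewrite !ev_K0 in Hh.
    change (pair 0 (pair e (pair 0 (pair x (pair 0 y))))) with (mkJ 0 e 0 x 0 y) in Hh.
    pose proof (Valid_sound l H1 h Hin) as HS. rewrite Hh in HS.
    rewrite Jsem_mk in HS. exact HS.
Qed.

Transparent andc orc notc eqc memc mkJc K0 BASEc Dc P1c.

Definition idx (d : nat) (ca cb : code) := app2 ADDc (K (5 + d)) (T4 (CPair ca cb)).
Lemma ev_idx d ca cb x : ev (idx d ca cb) x = 5 + 4 * pair (ev ca x) (ev cb x) + d.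
Proof. unfold idx, T4. rewrite !ev_app2, !ev_ADDc, ev_K. cbn [ev]. lia. Qed.

Definition KIDXc := CComp (CRec K0 (idx 1 (K 1) (CComp CSnd CSnd))) (CPair K0 CId).
Lemma ev_KIDXc n : ev KIDXc n = encode (K n).
Proof.
  unfold KIDXc, K0. cbn [K ev]. upsimp. induction n; cbn [rec_loop].
  - reflexivity.
  - rewrite ev_idx. cbn [ev K]. upsimp. rewrite IHn. reflexivity.
Qed.

Definition SUBIc (a b c : code) :=
  idx 1 a (idx 0 (CComp KIDXc a) (idx 0 (CComp KIDXc b) (idx 0 (CComp KIDXc c) (K 2)))).
Definition SUBI s n k :=
  5 + 4 * pair s (5 + 4 * pair (encode (K s)) (5 + 4 * pair (encode (K n))
     (5 + 4 * pair (encode (K k)) 2 + 0) + 0) + 0) + 1.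
Lemma ev_SUBIc a b c x : ev (SUBIc a b c) x = SUBI (ev a x) (ev b x) (ev c x).
Proof. unfold SUBIc, SUBI. rewrite !ev_idx. cbn [ev]. rewrite !ev_KIDXc, ev_K. reflexivity. Qed.

Lemma decode_SUBI s n k :
  decode (SUBI s n k) = CComp (decode s) (CPair (K s) (CPair (K n) (CPair (K k) CId))).
Proof.
  unfold SUBI. rewrite decode_form by lia. f_equal.
  rewrite decode_form by lia. rewrite decode_encode. f_equal.
  rewrite decode_form by lia. rewrite decode_encode. f_equal.
  rewrite decode_form by lia. rewrite decode_encode. reflexivity.
Qed.

Lemma psi_SUBI s n k z y : psi (SUBI s n k) z y <-> evalR (decode s) (pair s (pair n (pair k z))) y.
Proof.
  unfold psi. rewrite decode_SUBI.
  assert (Hi : implements (CPair (K s) (CPair (K n) (CPair (K k) CId)))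
                 (fun z => pair s (pair n (pair k z)))).
  { eapply implements_ext. apply ev_ok. simpl; repeat split; auto using mf_K.
    intros; cbn [ev]. rewrite !ev_K. reflexivity. }
  split.
  - intros H. inversion H; subst. apply (implements_det _ _ _ _ Hi) in H2. subst. auto.
  - intros H. econstructor; [apply Hi|exact H].
Qed.

Transparent andc orc notc eqc memc mkJc K0 BASEc Dc P1c.

Lemma eval0_iff c F z : implements c F -> (evalR c z 0 <-> F z = 0).
Proof.
  intros H. split; intros E.
  - symmetry. eapply implements_det; eauto.
  - rewrite <- E. apply H.
Qed.

Definition wtc gi xi wi := CComp TC (CPair gi (CPair xi (CPair (CComp CFst wi) (CComp CSnd wi)))).
Lemma ev_wtc gi xi wi z :
  ev (wtc gi xi wi) z = ev TC (pair (ev gi z) (pair (ev xi z) (pair (fst (unpair (ev wi z))) (snd (unpair (ev wi z)))))).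
Proof. reflexivity. Qed.

Definition Wt (ge x w : nat) := ev TC (pair ge (pair x (pair (fst (unpair w)) (snd (unpair w))))) = 0.

Lemma psi_Wt e x : (exists y, psi e x y) <-> exists w, Wt e x w.
Proof.
  unfold Wt, psi. split.
  - intros [y Hy]. apply TC_spec in Hy. destruct Hy as [d Hd]. exists (pair y d). upsimp. auto.
  - intros [w Hw]. exists (fst (unpair w)). apply TC_spec. eauto.
Qed.

Lemma mf_wtc gi xi wi : mufree gi -> mufree xi -> mufree wi -> mufree (wtc gi xi wi).
Proof. intros. unfold wtc. cbn [mufree]. pose proof mf_TC. tauto. Qed.

Lemma Pi02_Tot (phi : numbering) g Gf :
  implements g Gf -> (forall e x y, psi (Gf e) x y <-> phi e x y) -> Pi02 (Tot phi).
Proof.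
  intros Hg HG.
  set (pre := CPair (CComp g CFst) (CPair (CComp CFst CSnd) (CComp CSnd CSnd))).
  assert (Hpre : implements pre (fun z => pair (Gf (fst (unpair z)))
        (pair (fst (unpair (snd (unpair z)))) (snd (unpair (snd (unpair z))))))).
  { unfold pre. apply implements_pair. apply implements_comp; auto. apply ev_ok; exact I.
    apply implements_pair; apply ev_ok; simpl; tauto. }
  set (core := wtc CFst (CComp CFst CSnd) (CComp CSnd CSnd)).
  assert (Hcore : implements core (ev core)) by (apply ev_ok, mf_wtc; simpl; tauto).
  exists (CComp core pre). split.
  - eapply implements_total. apply implements_comp; eauto.
  - intros n. unfold Tot, W. split.
    + intros H x. specialize (H x). destruct H as [y Hy]. apply HG in Hy.
      destruct (proj1 (psi_Wt _ _) (ex_intro _ y Hy)) as [w Hw]. exists w.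
      rewrite (eval0_iff _ _ _ (implements_comp _ _ _ _ Hcore Hpre)).
      unfold core. rewrite ev_wtc. cbn [ev]. upsimp. exact Hw.
    + intros H x. destruct (H x) as [w Hw].
      rewrite (eval0_iff _ _ _ (implements_comp _ _ _ _ Hcore Hpre)) in Hw.
      unfold core in Hw. rewrite ev_wtc in Hw. cbn [ev] in Hw. upsimpH Hw.
      destruct (proj2 (psi_Wt _ _) (ex_intro _ w Hw)) as [y Hy]. exists y. apply HG; auto.
Qed.

Lemma W_Wt (phi : numbering) Gf :
  (forall e x y, psi (Gf e) x y <-> phi e x y) ->
  forall e x, W phi e x <-> exists w, Wt (Gf e) x w.
Proof.
  intros HG e x. unfold W. rewrite <- psi_Wt. split; intros [y Hy]; exists y; apply HG; auto.
Qed.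

Definition GEc := CFst.
Definition GAc := CComp CFst CSnd.
Definition Uc := CComp CFst (CComp CSnd (CComp CSnd CSnd)).
Definition Vc := CComp CSnd (CComp CSnd (CComp CSnd CSnd)).
Definition ac := CComp CFst Uc.
Definition xc := CComp CFst (CComp CSnd Uc).
Definition w1c := CComp CFst (CComp CSnd (CComp CSnd Uc)).
Definition w2c := CComp CSnd (CComp CSnd (CComp CSnd Uc)).
Definition w0c := CComp CFst Vc.
Definition w3c := CComp CFst (CComp CSnd Vc).
Definition w4c := CComp CSnd (CComp CSnd Vc).
Definition SCORE :=
  andc (wtc GEc (CComp CFst w0c) (CComp CSnd w0c))
  (andc (orc (notc (andc (wtc GEc ac w1c) (wtc GAc xc w2c))) (wtc GEc xc w3c))
        (orc (notc (andc (wtc GEc ac w1c) (wtc GEc xc w2c))) (wtc GAc xc w4c))).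

Lemma ev_SCORE ge ga e a x w1 w2 w0 w3 w4 :
  ev SCORE (pair ge (pair ga (pair e (pair (pair a (pair x (pair w1 w2))) (pair w0 (pair w3 w4)))))) = 0
  <-> Wt ge (fst (unpair w0)) (snd (unpair w0)) /\
      ((Wt ge a w1 /\ Wt ga x w2) -> Wt ge x w3) /\
      ((Wt ge a w1 /\ Wt ge x w2) -> Wt ga x w4).
Proof.
  unfold SCORE. rewrite !ev_andc, !ev_orc, !ev_notc, !ev_andc, !ev_wtc.
  unfold GEc, GAc, ac, xc, w1c, w2c, w0c, w3c, w4c, Uc, Vc. cbn [ev]. upsimp.
  unfold Wt. upsimp.
  split.
  - intros [H1 [H2 H3]]. split; [exact H1|]. split.
    + intros HH. destruct H2; [tauto|auto].
    + intros HH. destruct H3; [tauto|auto].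
  - intros [H1 [H2 H3]]. split; [exact H1|]. split.
    + destruct (classic (ev TC (pair ge (pair a (pair (fst (unpair w1)) (snd (unpair w1))))) = 0 /\
         ev TC (pair ga (pair x (pair (fst (unpair w2)) (snd (unpair w2))))) = 0)); [right|left]; tauto.
    + destruct (classic (ev TC (pair ge (pair a (pair (fst (unpair w1)) (snd (unpair w1))))) = 0 /\
         ev TC (pair ge (pair x (pair (fst (unpair w2)) (snd (unpair w2))))) = 0)); [right|left]; tauto.
Qed.

Lemma Pi02_S (phi : numbering) g Gf :
  implements g Gf -> (forall e x y, psi (Gf e) x y <-> phi e x y) -> Pi02 (S_set phi).
Proof.
  intros Hg HG.
  set (pre := CPair (CComp g CFst) (CPair (CComp g (CComp CFst (CComp CFst CSnd))) CId)).
  assert (Hpre : implements pre (fun z => pair (Gf (fst (unpair z)))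
        (pair (Gf (fst (unpair (fst (unpair (snd (unpair z))))))) z))).
  { unfold pre. apply implements_pair. apply implements_comp; auto. apply ev_ok; exact I.
    apply implements_pair. apply implements_comp; auto. apply ev_ok; simpl; tauto.
    apply ev_ok; exact I. }
  assert (Hcore : implements SCORE (ev SCORE)).
  { apply ev_ok. unfold SCORE. pose proof mf_TC.
    repeat (first [apply mf_andc | apply mf_orc | apply mf_notc | apply mf_wtc]; try (simpl; tauto)). }
  pose proof (implements_comp _ _ _ _ Hcore Hpre) as Hc.
  exists (CComp SCORE pre). split; [eapply implements_total; eauto|].
  pose proof (W_Wt phi Gf HG) as HW.
  intros e.
  assert (Key : forall u v, evalR (CComp SCORE pre) (pair e (pair u v)) 0 <->
     let a := fst (unpair u) in let x := fst (unpair (snd (unpair u))) in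
     let w1 := fst (unpair (snd (unpair (snd (unpair u))))) in
     let w2 := snd (unpair (snd (unpair (snd (unpair u))))) in
     let w0 := fst (unpair v) in let w3 := fst (unpair (snd (unpair v))) in
     let w4 := snd (unpair (snd (unpair v))) in
      Wt (Gf e) (fst (unpair w0)) (snd (unpair w0)) /\
      ((Wt (Gf e) a w1 /\ Wt (Gf a) x w2) -> Wt (Gf e) x w3) /\
      ((Wt (Gf e) a w1 /\ Wt (Gf e) x w2) -> Wt (Gf a) x w4)).
  { intros u v. rewrite (eval0_iff _ _ _ Hc). cbv beta. upsimp.
pose proof (ev_SCORE (Gf e) (Gf (fst (unpair u))) e (fst (unpair u))
      (fst (unpair (snd (unpair u)))) (fst (unpair (snd (unpair (snd (unpair u))))))
      (snd (unpair (snd (unpair (snd (unpair u)))))) (fst (unpair v))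
      (fst (unpair (snd (unpair v)))) (snd (unpair (snd (unpair v))))) as HS.
    rewrite !pair_unpair in HS. cbv zeta. rewrite HS. tauto. }
  unfold S_set, self_constructing. split.
  - intros [[a0 Ha0] [_ Hall]] u.
    set (a := fst (unpair u)). set (x := fst (unpair (snd (unpair u)))).
    apply HW in Ha0. destruct Ha0 as [wa Hwa].
    assert (E1 : exists w3, (Wt (Gf e) a (fst (unpair (snd (unpair (snd (unpair u)))))) /\
                Wt (Gf a) x (snd (unpair (snd (unpair (snd (unpair u))))))) -> Wt (Gf e) x w3).
    { destruct (classic (Wt (Gf e) a (fst (unpair (snd (unpair (snd (unpair u)))))) /\
                Wt (Gf a) x (snd (unpair (snd (unpair (snd (unpair u)))))))) as [[H1 H2]|H].
      - assert (W phi e a) by (apply HW; eauto). assert (W phi a x) by (apply HW; eauto).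
        apply (Hall a H x) in H0. apply HW in H0. destruct H0 as [w3 Hw3]. eauto.
      - exists 0; tauto. }
    assert (E2 : exists w4, (Wt (Gf e) a (fst (unpair (snd (unpair (snd (unpair u)))))) /\
                Wt (Gf e) x (snd (unpair (snd (unpair (snd (unpair u))))))) -> Wt (Gf a) x w4).
    { destruct (classic (Wt (Gf e) a (fst (unpair (snd (unpair (snd (unpair u)))))) /\
                Wt (Gf e) x (snd (unpair (snd (unpair (snd (unpair u)))))))) as [[H1 H2]|H].
      - assert (W phi e a) by (apply HW; eauto). assert (W phi e x) by (apply HW; eauto).
        apply (Hall a H x) in H0. apply HW in H0. destruct H0 as [w4 Hw4]. eauto.
      - exists 0; tauto. }
    destruct E1 as [w3 E1]. destruct E2 as [w4 E2].
    exists (pair (pair a0 wa) (pair w3 w4)). rewrite Key. cbv zeta. upsimp.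
    split; [exact Hwa|]. split; [exact E1|exact E2].
  - intros H. destruct (H 0) as [v Hv]. rewrite Key in Hv. cbv zeta in Hv.
    destruct Hv as [Hn _].
    split; [exists (fst (unpair (fst (unpair v)))); apply HW; eauto|].
    split.
    + exists (Gf e). intros x. rewrite psi_Wt. apply HW.
    + intros a Ha x. apply HW in Ha. destruct Ha as [w1 Hw1]. split.
      * intros Hx. apply HW in Hx. destruct Hx as [w2 Hw2].
        destruct (H (pair a (pair x (pair w1 w2)))) as [v' Hv']. rewrite Key in Hv'.
        cbv zeta in Hv'. upsimpH Hv'. destruct Hv' as [_ [Hv' _]]. apply HW; eauto.
      * intros Hx. apply HW in Hx. destruct Hx as [w2 Hw2].
        destruct (H (pair a (pair x (pair w1 w2)))) as [v' Hv']. rewrite Key in Hv'.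
        cbv zeta in Hv'. upsimpH Hv'. destruct Hv' as [_ [_ Hv']]. apply HW; eauto.
Qed.

Transparent andc orc notc eqc memc mkJc K0 BASEc Dc P1c.

Lemma ev_CComp f g x : ev (CComp f g) x = ev f (ev g x). Proof. reflexivity. Qed.
Lemma ev_CPair f g x : ev (CPair f g) x = pair (ev f x) (ev g x). Proof. reflexivity. Qed.
Lemma ev_CFst x : ev CFst x = fst (unpair x). Proof. reflexivity. Qed.
Lemma ev_CSnd x : ev CSnd x = snd (unpair x). Proof. reflexivity. Qed.
Ltac evrH H := repeat (first [rewrite ev_CComp in H | rewrite ev_CPair in H | rewrite ev_CFst in H
  | rewrite ev_CSnd in H | rewrite fst_up in H | rewrite snd_up in H]).
Ltac evr := repeat (first [rewrite ev_CComp | rewrite ev_CPair | rewrite ev_CFst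
  | rewrite ev_CSnd | rewrite fst_up | rewrite snd_up]).

Definition S_ := CComp CFst CFst.
Definition N_ := CComp CFst (CComp CSnd CFst).
Definition K_ := CComp CFst (CComp CSnd (CComp CSnd CFst)).
Definition Z_ := CComp CSnd (CComp CSnd (CComp CSnd CFst)).
Definition W1_ := CComp CFst CSnd.
Definition W2_ := CComp CSnd CSnd.
Definition pre2 (c f : code) := CPair (CComp c (CPair N_ (CPair K_ W1_))) (CPair Z_ (CComp f (SUBIc S_ N_ W2_))).
Definition core2 := andc CFst (eqc (CComp CFst CSnd) (CComp CSnd CSnd)).
Definition QQc (c f : code) := CMu (CComp core2 (pre2 c f)).
Definition Pnk (c f : code) n k := SUBI (encode (QQc c f)) n k.

Lemma pre2_impl c f Rf Ff : implements c Rf -> implements f Ff ->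
  implements (pre2 c f) (fun u =>
     pair (Rf (pair (ev N_ u) (pair (ev K_ u) (ev W1_ u))))
          (pair (ev Z_ u) (Ff (SUBI (ev S_ u) (ev N_ u) (ev W2_ u))))).
Proof.
  intros Hc Hf.
  unfold pre2. apply implements_pair.
    - apply implements_comp; auto. apply ev_ok. simpl; tauto.
    - apply implements_pair. apply ev_ok; simpl; tauto.
      eapply implements_ext. apply implements_comp; eauto. apply ev_ok.
      unfold SUBIc, idx, T4, KIDXc. apply mfb_ok. reflexivity.
      intros u. cbv beta. rewrite ev_SUBIc. reflexivity. 
Qed.

Lemma key_psi c f Rf Ff n k z : implements c Rf -> implements f Ff ->
  ((exists y, psi (Pnk c f n k) z y) <->
   (exists y, Rf (pair n (pair k y)) = 0) /\ (exists j, z = Ff (Pnk c f n j))).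
Proof.
  intros Hc Hf.
  set (s0 := encode (QQc c f)).
  pose proof (pre2_impl c f Rf Ff Hc Hf) as Hpre.
  assert (Hcore : implements core2 (ev core2)).
  { apply ev_ok. unfold core2. apply mf_andc. exact I. apply mf_eqc; simpl; tauto. }
  pose proof (implements_comp _ _ _ _ Hcore Hpre) as Ht.
  unfold Pnk. fold s0.
  assert (Hs0 : decode s0 = QQc c f) by apply decode_encode.
  clearbody s0.
  split.
  - intros [y Hy]. apply psi_SUBI in Hy. rewrite Hs0 in Hy.
    unfold QQc in Hy. destruct (proj1 (CMu_conv _ _ _ Ht) (ex_intro _ y Hy)) as [w Hw].
    cbv beta in Hw. unfold core2 in Hw. rewrite ev_andc, ev_eqc in Hw.
    unfold N_, K_, W1_, Z_, S_, W2_ in Hw. evrH Hw.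
    destruct Hw as [H1 H2]. split; eauto.
  - intros [[y Hy] [j Hj]].
    assert (exists y0, evalR (QQc c f) (pair s0 (pair n (pair k z))) y0) as [y0 Hy0].
    { unfold QQc. apply (CMu_conv _ _ _ Ht). exists (pair y j).
      cbv beta. unfold core2. rewrite ev_andc, ev_eqc.
      unfold N_, K_, W1_, Z_, S_, W2_. evr. split; auto. }
    exists y0. apply psi_SUBI. rewrite Hs0. exact Hy0.
Qed.

Lemma mf_KIDXc : mufree KIDXc.
Proof. apply mfb_ok. reflexivity. Qed.
Lemma mf_SUBIc a b c : mufree a -> mufree b -> mufree c -> mufree (SUBIc a b c).
Proof.
  intros. unfold SUBIc, idx, T4. pose proof mf_KIDXc. pose proof mf_ADDc.
  cbn [mufree]. repeat split; auto using mf_K.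
Qed.

Lemma hardness (phi : numbering) f Ff A :
  implements f Ff -> (forall e x y, phi (Ff e) x y <-> psi e x y) ->
  Pi02 A -> many_one A (S_set phi).
Proof.
  intros Hf HF [c [Hct Hc]].
  destruct (total_fun c Hct) as [Rf HR].
  set (red := CComp f (SUBIc (K (encode (QQc c f))) CId K0)).
  assert (Hred : implements red (fun n => Ff (Pnk c f n 0))).
  { unfold red. eapply implements_ext. apply implements_comp; eauto. apply ev_ok.
    apply mf_SUBIc; [apply mf_K|exact I|apply mf_K].
    intros n. cbv beta. rewrite ev_SUBIc, ev_K. reflexivity. }
  exists red. split; [eapply implements_total; eauto|].
  intros n. exists (Ff (Pnk c f n 0)). split; [apply Hred|].
  assert (HA : A n <-> forall k, exists y, Rf (pair n (pair k y)) = 0).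
  { rewrite Hc. split; intros H k; destruct (H k) as [y Hy]; exists y;
      [rewrite <- (eval0_iff _ _ _ HR)|rewrite (eval0_iff _ _ _ HR)]; auto. }
  assert (HWF : forall e x, W phi (Ff e) x <-> exists y, psi e x y).
  { intros e x. unfold W. split; intros [y Hy]; exists y; apply HF; auto. }
  rewrite HA. split.
  - intros H.
    assert (HX : forall k x, W phi (Ff (Pnk c f n k)) x <-> exists j, x = Ff (Pnk c f n j)).
    { intros k x. rewrite HWF, (key_psi c f Rf Ff n k x HR Hf). specialize (H k). tauto. }
    unfold S_set, self_constructing. split; [|split].
    + exists (Ff (Pnk c f n 0)). apply HX. eauto.
    + exists (Pnk c f n 0). intros x. apply HWF.
    + intros e He x. apply HX in He. destruct He as [j ->]. rewrite !HX. tauto.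
  - intros [[a Ha] [_ Hall]] k. apply NNPP. intros Hk.
    pose proof Ha as Ha'. apply HWF in Ha'. apply (key_psi c f Rf Ff n 0 a HR Hf) in Ha'.
    destruct Ha' as [H0 _].
    assert (Hin : W phi (Ff (Pnk c f n 0)) (Ff (Pnk c f n k))).
    { apply HWF. apply (key_psi c f Rf Ff n 0 _ HR Hf). split; eauto. }
    apply (Hall _ Hin a) in Ha. apply HWF in Ha.
    apply (key_psi c f Rf Ff n k a HR Hf) in Ha. tauto.
Qed.

Theorem mainTheorem8 :
  forall phi : numbering, acceptable phi ->
    (Pi02 (S_set phi) /\
     (forall A : nat -> Prop, Pi02 A -> many_one A (S_set phi))) /\
    many_one (Tot phi) (S_set phi).
Proof.
  intros phi [_ [[f [Hft Hf]] [g [Hgt Hg]]]].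
  destruct (total_fun f Hft) as [Ff HFf].
  destruct (total_fun g Hgt) as [Gf HGf].
  assert (HF : forall e x y, phi (Ff e) x y <-> psi e x y).
  { intros e x y. destruct (Hf e) as [e' [He' H]].
    apply (implements_det _ _ _ _ HFf) in He'. subst. apply H. }
  assert (HG : forall e x y, psi (Gf e) x y <-> phi e x y).
  { intros e x y. destruct (Hg e) as [e' [He' H]].
    apply (implements_det _ _ _ _ HGf) in He'. subst. apply H. }
  split; [split|].
  - apply (Pi02_S phi g Gf HGf HG).
  - intros A HA. apply (hardness phi f Ff A HFf HF HA).
  - apply (hardness phi f Ff _ HFf HF). apply (Pi02_Tot phi g Gf HGf HG).
Qed.
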